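(* Let $\alpha_1,\dots,\alpha_k$ be nonnegative reals with $\sum_{i=1}^k\alpha_i=1$ and let $\frac13\le\theta\le1$. For $I\subset\{1,\dots,k\}$ write $\alpha_I=\sum_{i\in I}\alpha_i$. Consider the statements: ($I$) $\alpha_i\ge1-\theta$ for some $i$; ($I_2^{\mathrm{maj}}$) $\alpha_{\{i,j\}}\ge1-\theta$ for some $1\le i<j\le k$; ($I_2$) $\alpha_{\{i,j\}}\ge\frac32(1-\theta)$ for some $1\le i<j\le k$; ($II^{\mathrm{maj}}$) there is a partition $\{1,\dots,k\}=I\uplus J\uplus J'$ with $2\theta-1\le\alpha_I\le4\theta-2$ and $|\alpha_J-\alpha_{J'}|\le2\theta-1$; ($II^{\mathrm{min}}$) there is a partition $\{1,\dots,k\}=J\uplus J'$ with $|\alpha_J-\alpha_{J'}|\le2\theta-1$. Then: (i) if $\theta=5/8$, at least one of ($I$), ($II^{\mathrm{maj}}$) holds; (ii) if $\theta\ge3/5$, at least one of ($I$), ($I_2$), ($II^{\mathrm{min}}$) holds; (iii) if $\theta=7/12$, at least one of ($I$), ($I_2^{\mathrm{maj}}$), ($II^{\mathrm{maj}}$) holds; (iv) if $k=5$ and $\theta=11/20$, at least one of ($I_2^{\mathrm{maj}}$), ($II^{\mathrm{maj}}$) holds; (v) if $k\in\{3,4\}$ and $\theta\ge1/2$, then ($I_2^{\mathrm{maj}}$) holds; (vi) if $k=3$ and $\theta\ge5/9$, or $k=2$ and $\theta\ge1/3$, then ($I_2$) holds. *)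

(* Defs.v *)
From mathcomp Require Import all_boot all_order all_algebra.
Set Implicit Arguments. Unset Strict Implicit. Unset Printing Implicit Defensive.
Import Order.TTheory GRing.Theory Num.Theory.
Local Open Scope ring_scope.

Definition alphaS (R : realFieldType) (k : nat) (alpha : 'I_k -> R)
  (I : {set 'I_k}) : R := \sum_(i in I) alpha i.

Definition condI (R : realFieldType) (k : nat) (alpha : 'I_k -> R) (theta : R) : Prop :=
  exists i : 'I_k, 1 - theta <= alpha i.

Definition condI2maj (R : realFieldType) (k : nat) (alpha : 'I_k -> R) (theta : R) : Prop :=
  exists i j : 'I_k, (i < j)%N /\ 1 - theta <= alphaS alpha [set i; j].

Definition condI2 (R : realFieldType) (k : nat) (alpha : 'I_k -> R) (theta : R) : Prop :=
  exists i j : 'I_k, (i < j)%N /\ (3%:R / 2%:R) * (1 - theta) <= alphaS alpha [set i; j].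

Definition condIImaj (R : realFieldType) (k : nat) (alpha : 'I_k -> R) (theta : R) : Prop :=
  exists I J J' : {set 'I_k},
    [/\ [disjoint I & J], [disjoint I & J'], [disjoint J & J'] & I :|: J :|: J' = setT] /\
    2%:R * theta - 1 <= alphaS alpha I /\ alphaS alpha I <= 4%:R * theta - 2%:R /\
    `|alphaS alpha J - alphaS alpha J'| <= 2%:R * theta - 1.

Definition condIImin (R : realFieldType) (k : nat) (alpha : 'I_k -> R) (theta : R) : Prop :=
  exists J J' : {set 'I_k},
    [disjoint J & J'] /\ J :|: J' = setT /\
    `|alphaS alpha J - alphaS alpha J'| <= 2%:R * theta - 1.

(* Main.v *)
Require Import Defs.
From mathcomp Require Import all_boot all_order all_algebra.
From mathcomp Require Import lra.
Import Order.TTheory GRing.Theory Num.Theory.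
Local Open Scope ring_scope.

Lemma sumU (R : realFieldType) k (f : 'I_k -> R) (A B : {set 'I_k}) :
  [disjoint A & B] -> \sum_(i in A :|: B) f i = \sum_(i in A) f i + \sum_(i in B) f i.
Proof.
move=> D; rewrite -bigU //; apply: eq_bigl => i; by rewrite !inE.
Qed.

Lemma sumC (R : realFieldType) k (f : 'I_k -> R) (S : {set 'I_k}) :
  \sum_(i in ~: S) f i = \sum_i f i - \sum_(i in S) f i.
Proof.
rewrite (bigID (mem S) xpredT) /=.
have -> : \sum_(i | i \in S) f i = \sum_(i in S) f i by [].
rewrite addrC addrK; apply: eq_bigl => i; by rewrite !inE.
Qed.

Lemma sumD (R : realFieldType) k (f : 'I_k -> R) (S J : {set 'I_k}) :
  J \subset S -> \sum_(i in S :\: J) f i = \sum_(i in S) f i - \sum_(i in J) f i.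
Proof.
move=> JS; rewrite [X in _ = X - _](big_setID J) /=.
by rewrite (setIidPr JS) addrC addrK.
Qed.

Lemma pairS (R : realFieldType) k (f : 'I_k -> R) (i j : 'I_k) :
  i != j -> alphaS f [set i; j] = f i + f j.
Proof.
by move=> ij; rewrite /alphaS big_setU1 ?big_set1 // in_set1.
Qed.

Lemma greedy (R : realFieldType) k (f : 'I_k -> R) (c s0 L : R) (A : {set 'I_k}) :
  0 <= c -> (forall i, i \in A -> 0 <= f i <= c) -> s0 <= L ->
  L <= s0 + \sum_(i in A) f i ->
  exists2 T : {set 'I_k}, T \subset A & L <= s0 + \sum_(i in T) f i <= L + c.
Proof.
move=> c0; have [n] := ubnP #|A|; elim: n A => // n IH A.
have [x xA | A0] := pickP (fun i => i \in A).
- rewrite (cardsD1 x) xA ltnS => cA Hf s0L.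
  rewrite (big_setD1 _ xA) /= => Ls.
  have [Hle|Hlt] := lerP L (s0 + \sum_(i in A :\ x) f i).
  + have [T TA HT] := IH (A :\ x) cA (fun i iA => Hf i (subsetP (subD1set A x) i iA)) s0L Hle.
    exists T => //; exact: subset_trans TA (subD1set A x).
  + exists A => //; rewrite (big_setD1 _ xA) /=; apply/andP; split => //.
    have := Hf x xA; case/andP => _ fx; lra.
- move=> _ _ s0L; rewrite big_pred0 // addr0 => Ls.
  exists set0; first exact: sub0set.
  rewrite big_set0 addr0; apply/andP; split => //; lra.
Qed.


Lemma mkIImaj (R : realFieldType) k (f : 'I_k -> R) (theta : R) (S J : {set 'I_k}) :
  \sum_(i < k) f i = 1 -> J \subset S ->
  3%:R - 4%:R * theta <= alphaS f S <= 2%:R - 2%:R * theta ->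
  - (2%:R * theta - 1) <= 2%:R * alphaS f J - alphaS f S <= 2%:R * theta - 1 ->
  condIImaj f theta.
Proof.
move=> Hs JS /andP[H1 H2] /andP[H3 H4].
exists (~: S), J, (S :\: J); split.
  split.
  - by rewrite disjoints_subset setCS.
  - by rewrite disjoints_subset setCS subsetDl.
  - by rewrite disjoints_subset; apply/subsetP => i iJ; rewrite !inE iJ.
  - apply/setP => i; rewrite !inE; have := subsetP JS i.
    by case: (i \in J); case: (i \in S) => // /(_ isT).
have eI : alphaS f (~: S) = 1 - alphaS f S by rewrite /alphaS sumC Hs.
have eJ : alphaS f (S :\: J) = alphaS f S - alphaS f J by rewrite /alphaS sumD.
rewrite eI eJ; split; [lra|split; [lra|]].
rewrite ler_norml; apply/andP; split; lra.
Qed.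

Lemma mkIImin (R : realFieldType) k (f : 'I_k -> R) (theta : R) (J : {set 'I_k}) :
  \sum_(i < k) f i = 1 ->
  - (2%:R * theta - 1) <= 2%:R * alphaS f J - 1 <= 2%:R * theta - 1 ->
  condIImin f theta.
Proof.
move=> Hs /andP[H3 H4].
exists J, (~: J); split; first by rewrite disjoints_subset setCK.
split; first by rewrite setUCr.
have eI : alphaS f (~: J) = 1 - alphaS f J by rewrite /alphaS sumC Hs.
rewrite eI ler_norml; apply/andP; split; lra.
Qed.


Lemma coreIImaj (R : realFieldType) k (f : 'I_k -> R) (theta : R) (J0 J1 : {set 'I_k}) :
  (forall i, 0 <= f i) -> \sum_(i < k) f i = 1 -> 1 / 2%:R <= theta ->
  [disjoint J0 & J1] ->
  (forall i, i \notin J0 :|: J1 -> f i <= 2%:R * theta - 1) ->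
  alphaS f J0 + alphaS f J1 <= 3%:R - 4%:R * theta ->
  alphaS f J0 <= 1 - theta -> alphaS f J1 <= 1 - theta ->
  condIImaj f theta.
Proof.
move=> f0 Hs th D01 Hout Hcore H0 H1.
set K := J0 :|: J1.
have eK : alphaS f K = alphaS f J0 + alphaS f J1 by rewrite /alphaS sumU.
have eA : \sum_(i in ~: K) f i = 1 - alphaS f K by rewrite sumC Hs.
have c0 : 0 <= 2%:R * theta - 1 by lra.
have [T TA /andP[T1 T2]] := @greedy R k f (2%:R * theta - 1) (alphaS f K) (3%:R - 4%:R * theta) (~: K) c0
   (fun i iA => ltac:(rewrite f0 /=; apply: Hout; by rewrite inE in iA))
   ltac:(lra) ltac:(rewrite eA; lra).
have DKT : [disjoint K & T].
  by rewrite disjoint_sym disjoints_subset.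
set S := K :|: T.
have eS : alphaS f S = alphaS f J0 + alphaS f J1 + \sum_(i in T) f i.
  by rewrite /alphaS sumU // -/(alphaS f K) eK.
have J0S : J0 \subset S by rewrite /S /K -setUA subsetUl.
have [Hbig|Hsmall] := lerP ((alphaS f S - (2%:R * theta - 1)) / 2%:R) (alphaS f J0).
  apply: (@mkIImaj R k f theta S J0) => //; apply/andP; split; lra.
have Tb : forall i, i \in T -> 0 <= f i <= 2%:R * theta - 1.
  move=> i iT; rewrite f0 /=; apply: Hout.
  by have := subsetP TA i iT; rewrite inE.
have [U UT /andP[U1 U2]] := @greedy R k f (2%:R * theta - 1) (alphaS f J0)
   ((alphaS f S - (2%:R * theta - 1)) / 2%:R) T c0 Tb ltac:(lra) ltac:(lra).
have D0U : [disjoint J0 & U].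
  rewrite disjoint_sym disjoints_subset; apply: (subset_trans UT).
  apply: (subset_trans TA); rewrite setCS /K; exact: subsetUl.
have eJ : alphaS f (J0 :|: U) = alphaS f J0 + \sum_(i in U) f i by rewrite /alphaS sumU.
apply: (@mkIImaj R k f theta S (J0 :|: U)) => //.
- rewrite subUset J0S /S; apply: (subset_trans UT); exact: subsetUr.
- apply/andP; split; lra.
- rewrite eJ; apply/andP; split; lra.
Qed.

Lemma coreIImin (R : realFieldType) k (f : 'I_k -> R) (theta : R) (J0 : {set 'I_k}) :
  (forall i, 0 <= f i) -> \sum_(i < k) f i = 1 -> 1 / 2%:R <= theta ->
  (forall i, i \notin J0 -> f i <= 2%:R * theta - 1) ->
  alphaS f J0 <= 1 - theta ->
  condIImin f theta.
Proof.
move=> f0 Hs th Hout H0.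
have eA : \sum_(i in ~: J0) f i = 1 - alphaS f J0 by rewrite sumC Hs.
have c0 : 0 <= 2%:R * theta - 1 by lra.
have [T TA /andP[T1 T2]] := @greedy R k f (2%:R * theta - 1) (alphaS f J0) (1 - theta) (~: J0) c0
   (fun i iA => ltac:(rewrite f0 /=; apply: Hout; by rewrite inE in iA))
   ltac:(lra) ltac:(rewrite eA; lra).
have D : [disjoint J0 & T] by rewrite disjoint_sym disjoints_subset.
apply: (@mkIImin R k f theta (J0 :|: T)) => //.
rewrite /alphaS sumU // -/(alphaS f J0); apply/andP; split; lra.
Qed.


Lemma dec_single (R : realFieldType) k (f : 'I_k -> R) (b : R) :
  (exists i, b <= f i) \/ (forall i, f i < b).
Proof.
have [x Hx|N] := pickP (fun i => b <= f i); first by left; exists x.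
by right => i; have := N i; rewrite /= ltNge => ->.
Qed.

Lemma dec_pair (R : realFieldType) k (f : 'I_k -> R) (b : R) :
  (exists i j : 'I_k, (i < j)%N /\ b <= alphaS f [set i; j]) \/
  (forall i j, i != j -> f i + f j < b).
Proof.
have [[x y] /andP[H1 H2]|N] := pickP (fun p : 'I_k * 'I_k => (p.1 < p.2)%N && (b <= alphaS f [set p.1; p.2])).
  by left; exists x, y.
right => i j ij.
have [lt|gt|eq] := ltngtP i j.
- have := N (i, j); rewrite /= lt /= pairS // => /negbT; by rewrite -ltNge.
- have := N (j, i); rewrite /= gt /= pairS 1?eq_sym // addrC => /negbT; by rewrite -ltNge.
- by move: ij; rewrite (val_inj eq) eqxx.
Qed.



Lemma aS0 (R : realFieldType) k (f : 'I_k -> R) : alphaS f set0 = 0.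
Proof. by rewrite /alphaS big_set0. Qed.
Lemma aS1 (R : realFieldType) k (f : 'I_k -> R) x : alphaS f [set x] = f x.
Proof. by rewrite /alphaS big_set1. Qed.
Lemma disj0 k (A : {set 'I_k}) : [disjoint A & set0].
Proof. by rewrite disjoints_subset setC0 subsetT. Qed.

Lemma part1 (R : realFieldType) k (f : 'I_k -> R) th :
  (forall i, 0 <= f i) -> \sum_(i < k) f i = 1 -> th = 5%:R / 8%:R ->
  condI f th \/ condIImaj f th.
Proof.
move=> f0 Hs Hth.
have [HI|nI] := @dec_single R k f (1 - th); [by left|right].
have th2 : 1 / 2%:R <= th by lra.
have [x1 /andP[b1 _]|N1] := pickP (fun i => (2%:R * th - 1 < f i) && true).
- have [x2 /andP[b2 n21]|N2] := pickP (fun i => (2%:R * th - 1 < f i) && (i != x1)).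
  + apply: (@mkIImaj R k f th [set x1; x2] [set x1]) => //.
    * by rewrite sub1set !inE eqxx.
    * have := nI x1; have := nI x2; rewrite pairS 1?eq_sym //; lra.
    * have := nI x1; have := nI x2; rewrite pairS 1?eq_sym // aS1; lra.
  + apply: (@coreIImaj R k f th [set x1] set0) => //.
    * exact: disj0.
    * move=> i; rewrite !inE orbF => ni; have := N2 i; rewrite /= ni andbT.
      by move/negbT; rewrite -leNgt.
    * have := nI x1; rewrite aS1 aS0 ; lra.
    * have := nI x1; rewrite aS1; lra.
    * rewrite aS0 ; lra.
- apply: (@coreIImaj R k f th set0 set0) => //.
  + exact: disj0.
  + by move=> i _; have := N1 i; rewrite /= andbT; move/negbT; rewrite -leNgt.
  + rewrite aS0 ; lra.
  + rewrite aS0 ; lra.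
  + rewrite aS0 ; lra.
Qed.


Lemma nbig (R : realFieldType) (c x : R) b : (c < x) && b = false -> b -> x <= c.
Proof. by move=> H bb; move: H; rewrite bb andbT => /negbT; rewrite -leNgt. Qed.

Lemma part3 (R : realFieldType) k (f : 'I_k -> R) th :
  (forall i, 0 <= f i) -> \sum_(i < k) f i = 1 -> th = 7%:R / 12%:R ->
  condI f th \/ condI2maj f th \/ condIImaj f th.
Proof.
move=> f0 Hs Hth.
have [HI|nI] := @dec_single R k f (1 - th); [by left|right].
have [HP|nP] := @dec_pair R k f (1 - th); [by left|right].
have th2 : 1 / 2%:R <= th by lra.
have [x1 /andP[b1 _]|N1] := pickP (fun i => (2%:R * th - 1 < f i) && true); last first.
  apply: (@coreIImaj R k f th set0 set0) => //; rewrite ?aS0; try lra.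
  + exact: disj0.
  + by move=> i _; exact: (@nbig R _ _ true (N1 i) isT).
have [x2 /andP[b2 n21]|N2] := pickP (fun i => (2%:R * th - 1 < f i) && (i != x1)); last first.
  apply: (@coreIImaj R k f th [set x1] set0) => //; rewrite ?aS0 ?aS1.
  + exact: disj0.
  + by move=> i; rewrite !inE orbF => ni; exact: (@nbig R _ _ _ (N2 i) ni).
  + have := nI x1; lra.
  + have := nI x1; lra.
  + lra.
have p12 := nP x1 x2 ltac:(by rewrite eq_sym).
have [x3 /and3P[b3 n31 n32]|N3] := pickP (fun i => [&& 2%:R * th - 1 < f i, i != x1 & i != x2]); last first.
  apply: (@coreIImaj R k f th [set x1] [set x2]) => //; rewrite ?aS1.
  + by rewrite disjoints_subset sub1set !inE eq_sym.
  + move=> i; rewrite !inE negb_or => /andP[a b]; apply: (@nbig R _ _ _ (N3 i)); by rewrite a b.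
  + lra.
  + have := nI x1; lra.
  + have := nI x2; lra.
have p13 := nP x1 x3 ltac:(by rewrite eq_sym).
have p23 := nP x2 x3 ltac:(by rewrite eq_sym).
have n23 : x2 != x3 by rewrite eq_sym.
have [x4 /and4P[b4 n41 n42 n43]|N4] := pickP (fun i => [&& 2%:R * th - 1 < f i, i != x1, i != x2 & i != x3]); last first.
  apply: (@coreIImaj R k f th [set x1] [set x2; x3]) => //; rewrite ?aS1 ?pairS //.
  + by rewrite disjoints_subset sub1set !inE negb_or ![x1 == _]eq_sym n21 n31.
  + move=> i; rewrite !inE !negb_or => /and3P[a b c]; apply: (@nbig R _ _ _ (N4 i)); by rewrite a b c.
  + lra.
  + have := nI x1; lra.
  + lra.
have p14 := nP x1 x4 ltac:(by rewrite eq_sym).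
have p34 := nP x3 x4 ltac:(by rewrite eq_sym).
have D : [disjoint [set x1; x2] & [set x3; x4]].
  rewrite disjoints_subset; apply/subsetP => i; rewrite !inE negb_or.
  by move=> /orP[]/eqP->; apply/andP; split; rewrite eq_sym.
have eS : alphaS f ([set x1; x2] :|: [set x3; x4]) = f x1 + f x2 + (f x3 + f x4).
  by rewrite /alphaS sumU // -!/(alphaS f _) !pairS // eq_sym.
apply: (@mkIImaj R k f th ([set x1; x2] :|: [set x3; x4]) [set x1; x2]) => //.
- exact: subsetUl.
- rewrite eS; lra.
- rewrite eS pairS 1?eq_sym //; lra.
Qed.


Lemma part2 (R : realFieldType) k (f : 'I_k -> R) th :
  (forall i, 0 <= f i) -> \sum_(i < k) f i = 1 -> 3%:R / 5%:R <= th -> th <= 1 ->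
  condI f th \/ condI2 f th \/ condIImin f th.
Proof.
move=> f0 Hs Hth Hth1.
have [HI|nI] := @dec_single R k f (1 - th); [by left|right].
have [HP|nP] := @dec_pair R k f ((3%:R / 2%:R) * (1 - th)); [by left|right].
have th2 : 1 / 2%:R <= th by lra.
have [x1 /andP[b1 _]|N1] := pickP (fun i => (2%:R * th - 1 < f i) && true); last first.
  apply: (@coreIImin R k f th set0) => //; rewrite ?aS0; try lra.
  by move=> i _; exact: (@nbig R _ _ true (N1 i) isT).
have [x2 /andP[b2 n21]|N2] := pickP (fun i => (2%:R * th - 1 < f i) && (i != x1)); last first.
  apply: (@coreIImin R k f th [set x1]) => //; rewrite ?aS1.
  + by move=> i; rewrite !inE => ni; exact: (@nbig R _ _ _ (N2 i) ni).
  + have := nI x1; lra.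
have p12 := nP x1 x2 ltac:(by rewrite eq_sym).
apply: (@mkIImin R k f th [set x1; x2]) => //; rewrite pairS 1?eq_sym //; lra.
Qed.

Lemma part56 (R : realFieldType) k (f : 'I_k -> R) th :
  (forall i, 0 <= f i) -> \sum_(i < k) f i = 1 -> 1 / 3%:R <= th -> th <= 1 ->
      ((k = 3%N \/ k = 4%N) -> 1 / 2%:R <= th -> condI2maj f th) /\
      (((k = 3%N /\ 5%:R / 9%:R <= th) \/ (k = 2%N /\ 1 / 3%:R <= th)) ->
         condI2 f th).
Proof.
move=> f0 Hs th3 th1; split.
- move=> Hk th2; have [HP|nP] := @dec_pair R k f (1 - th) => //; exfalso.
  case: Hk => Hk; subst k; move: Hs.
  + rewrite !big_ord_recl big_ord0 addr0.
    set a := f _; set b := f _; set c := f _.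
    have := nP ord0 (lift ord0 ord0) isT; have := nP ord0 (lift ord0 (lift ord0 ord0)) isT.
    have := nP (lift ord0 ord0) (lift ord0 (lift ord0 ord0)) isT.
    rewrite -/a -/b -/c; lra.
  + rewrite !big_ord_recl big_ord0 addr0.
    set a := f _; set b := f _; set c := f _; set d := f _.
    have := nP ord0 (lift ord0 ord0) isT.
    have := nP (lift ord0 (lift ord0 ord0)) (lift ord0 (lift ord0 (lift ord0 ord0))) isT.
    rewrite -/a -/b -/c -/d; lra.
- move=> Hk; have [HP|nP] := @dec_pair R k f ((3%:R / 2%:R) * (1 - th)) => //; exfalso.
  case: Hk => -[Hk th2]; subst k; move: Hs.
  + rewrite !big_ord_recl big_ord0 addr0.
    set a := f _; set b := f _; set c := f _.
    have := nP ord0 (lift ord0 ord0) isT; have := nP ord0 (lift ord0 (lift ord0 ord0)) isT.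
    have := nP (lift ord0 ord0) (lift ord0 (lift ord0 ord0)) isT.
    rewrite -/a -/b -/c; lra.
  + rewrite !big_ord_recl big_ord0 addr0.
    set a := f _; set b := f _.
    have := nP ord0 (lift ord0 ord0) isT.
    rewrite -/a -/b; lra.
Qed.


Lemma L5 (R : realFieldType) (a b c d e : R) :
  0 <= e -> e <= a -> e <= b -> e <= c -> e <= d -> e + a + b + c + d = 1 ->
  a + b < 9%:R/20%:R -> a + c < 9%:R/20%:R -> a + d < 9%:R/20%:R ->
  b + c < 9%:R/20%:R -> b + d < 9%:R/20%:R -> c + d < 9%:R/20%:R ->
  (-(1/10%:R) <= 2%:R * (a + b) - (1 - e) <= 1/10%:R) \/
  (-(1/10%:R) <= 2%:R * (a + c) - (1 - e) <= 1/10%:R) \/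
  (-(1/10%:R) <= 2%:R * (a + d) - (1 - e) <= 1/10%:R).
Proof.
move=> *.
case: (lerP (2%:R * (a + b) - (1 - e)) (1/10%:R)) => h1;
case: (lerP (-(1/10%:R)) (2%:R * (a + b) - (1 - e))) => h2; try (by left; apply/andP; split);
case: (lerP (2%:R * (a + c) - (1 - e)) (1/10%:R)) => h3;
case: (lerP (-(1/10%:R)) (2%:R * (a + c) - (1 - e))) => h4; try (by right; left; apply/andP; split);
right; right; apply/andP; split; lra.
Qed.


Lemma IVmk (R : realFieldType) (f : 'I_5 -> R) th (m p q : 'I_5) :
  \sum_(i < 5) f i = 1 -> th = 11%:R / 20%:R ->
  p != q -> p != m -> q != m ->
  1/10%:R <= f m <= 1/5%:R ->
  (-(1/10%:R) <= 2%:R * (f p + f q) - (1 - f m) <= 1/10%:R) ->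
  condIImaj f th.
Proof.
move=> Hs Hth pq pm qm /andP[m1 m2] /andP[h1 h2].
have eS : alphaS f (~: [set m]) = 1 - f m by rewrite /alphaS sumC Hs big_set1.
apply: (@mkIImaj R 5 f th (~: [set m]) [set p; q]) => //.
- apply/subsetP => i; rewrite !inE => /orP[]/eqP->; by rewrite ?pm ?qm.
- rewrite eS; apply/andP; split; lra.
- rewrite eS pairS //; apply/andP; split; lra.
Qed.

Lemma part4_case (R : realFieldType) (f : 'I_5 -> R) th (m p q r s : 'I_5) :
  \sum_(i < 5) f i = 1 -> th = 11%:R / 20%:R -> 0 <= f m ->
  f m + f p + f q + f r + f s = 1 ->
  p != q -> p != r -> p != s -> p != m -> q != m -> r != m -> s != m ->
  f m <= f p -> f m <= f q -> f m <= f r -> f m <= f s ->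
  f p + f q < 1 - th -> f p + f r < 1 - th -> f p + f s < 1 - th ->
  f q + f r < 1 - th -> f q + f s < 1 - th -> f r + f s < 1 - th ->
  condIImaj f th.
Proof.
move=> Hs Hth f0 H5 pq pr ps pm qm rm sm m1 m2 m3 m4 c1 c2 c3 c4 c5 c6.
have hm : 1/10%:R <= f m <= 1/5%:R by apply/andP; split; lra.
have [] := @L5 R (f p) (f q) (f r) (f s) (f m) f0 m1 m2 m3 m4 ltac:(lra)
  ltac:(lra) ltac:(lra) ltac:(lra) ltac:(lra) ltac:(lra) ltac:(lra).
- exact: (@IVmk R f th m p q).
- case=> H.
  + exact: (@IVmk R f th m p r).
  + exact: (@IVmk R f th m p s).
Qed.

Definition q0 : 'I_5 := ord0.
Definition q1 : 'I_5 := lift ord0 ord0.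
Definition q2 : 'I_5 := lift ord0 (lift ord0 ord0).
Definition q3 : 'I_5 := lift ord0 (lift ord0 (lift ord0 ord0)).
Definition q4 : 'I_5 := lift ord0 (lift ord0 (lift ord0 (lift ord0 ord0))).

Lemma ord5 (m : 'I_5) : m = q0 \/ m = q1 \/ m = q2 \/ m = q3 \/ m = q4.
Proof.
case: m => [[|[|[|[|[|m]]]]] Hm] //;
[left|right;left|right;right;left|right;right;right;left|right;right;right;right];
exact: val_inj.
Qed.

Lemma part4 (R : realFieldType) (f : 'I_5 -> R) th :
  (forall i, 0 <= f i) -> \sum_(i < 5) f i = 1 -> th = 11%:R / 20%:R ->
  condI2maj f th \/ condIImaj f th.
Proof.
move=> f0 Hs Hth.
have [HP|nP] := @dec_pair R 5 f (1 - th); [by left|right].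
have H5 : f q0 + f q1 + f q2 + f q3 + f q4 = 1.
  by move: Hs; rewrite !big_ord_recl big_ord0 addr0 !addrA.
have [m _ Hm] := @arg_minP _ R _ q0 xpredT f isT.
have M := fun j => Hm j isT.
case: (ord5 m) => [->|[->|[->|[->|->]]]] in M *.
- apply: (@part4_case R f th q0 q1 q2 q3 q4) => //; try lra; by apply: nP.
- apply: (@part4_case R f th q1 q0 q2 q3 q4) => //; try lra; by apply: nP.
- apply: (@part4_case R f th q2 q0 q1 q3 q4) => //; try lra; by apply: nP.
- apply: (@part4_case R f th q3 q0 q1 q2 q4) => //; try lra; by apply: nP.
- apply: (@part4_case R f th q4 q0 q1 q2 q3) => //; try lra; by apply: nP.
Qed.


Theorem lemma2p20 (R : realFieldType) (k : nat) (alpha : 'I_k -> R) (theta : R) :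
  (forall i, 0 <= alpha i) -> \sum_(i < k) alpha i = 1 ->
  1 / 3%:R <= theta -> theta <= 1 ->
  (theta = 5%:R / 8%:R ->
         condI alpha theta \/ condIImaj alpha theta) /\
      (3%:R / 5%:R <= theta ->
         condI alpha theta \/ condI2 alpha theta \/ condIImin alpha theta) /\
      (theta = 7%:R / 12%:R ->
         condI alpha theta \/ condI2maj alpha theta \/ condIImaj alpha theta) /\
      (k = 5%N -> theta = 11%:R / 20%:R ->
         condI2maj alpha theta \/ condIImaj alpha theta) /\
      ((k = 3%N \/ k = 4%N) -> 1 / 2%:R <= theta -> condI2maj alpha theta) /\
      (((k = 3%N /\ 5%:R / 9%:R <= theta) \/ (k = 2%N /\ 1 / 3%:R <= theta)) ->
         condI2 alpha theta).
Proof.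
move=> f0 Hs th3 th1.
have [P5 P6] := @part56 R k alpha theta f0 Hs th3 th1.
split; first exact: (@part1 R k alpha theta f0 Hs).
split; first by move=> h; exact: (@part2 R k alpha theta f0 Hs h th1).
split; first exact: (@part3 R k alpha theta f0 Hs).
split; last by split.
move=> Hk; subst k; exact: (@part4 R alpha theta f0 Hs).
Qed.
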